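(* Fix any $\lambda\in[0,\infty)$ and $i\in[n]$. If $\ell(z_i,\cdot)$ is differentiable and $m(P_{-i},\cdot,\lambda)$ has $\nu(r)=c_mr^q$ gradient growth for some $c_m>0$ and $q>0$, then $$\|\hat\beta(\lambda)-\hat\beta_{-i}(\lambda)\|_2^{q-1}\le\frac1n\frac1{c_m}\|\nabla_\beta\ell(z_i,\hat\beta(\lambda))\|_2.$$
   Context: Data $z_1,\dots,z_n\in\mathcal Z$; loss $\ell:\mathcal Z\times\mathbb{R}^d\to\mathbb{R}$, regularizer $\pi:\mathbb{R}^d\to\mathbb{R}$. $\ell(\mu,\beta):=\int\ell(z,\beta)d\mu(z)$, $m(\mu,\beta,\lambda):=\ell(\mu,\beta)+\lambda\pi(\beta)$; $P_n:=\frac1n\sum_i\delta_{z_i}$, $P_{-i}:=\frac1n\sum_{j\ne i}\delta_{z_j}$. $\hat\beta(\lambda):=\arg\min_\beta m(P_n,\beta,\lambda)$, $\hat\beta_{-i}(\lambda):=\arg\min_\beta m(P_{-i},\beta,\lambda)$. A function $\varphi$ has $\nu$ gradient growth if it is subdifferentiable and $\nu(\|x-y\|_2)\le\langle y-x,u-v\rangle$ for all $x,y\in\mathbb{R}^d$ and all $u\in\partial\varphi(y)$, $v\in\partial\varphi(x)$. *)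

(* Defs.v *)
From HB Require Import structures.
From mathcomp Require Import all_boot all_order all_algebra.
From mathcomp Require Import all_classical all_reals all_analysis.
Set Implicit Arguments. Unset Strict Implicit. Unset Printing Implicit Defensive.
Import Order.TTheory GRing.Theory Num.Theory.
Import numFieldNormedType.Exports.
Local Open Scope ring_scope.

Section Defs.
Variable R : realType.
Variable d : nat.

Definition dotv (x y : 'rV[R]_d) : R := \sum_(j < d) x ord0 j * y ord0 j.
Definition norm2 (x : 'rV[R]_d) : R := Num.sqrt (dotv x x).

Definition grad (f : 'rV[R]_d -> R) (x : 'rV[R]_d) : 'rV[R]_d :=
  \row_(j < d) ('d f x) (delta_mx ord0 j).

Definition subgrad (phi : 'rV[R]_d -> R) (x u : 'rV[R]_d) : Prop :=
  forall y, phi x + dotv u (y - x) <= phi y.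

Definition gradient_growth (phi : 'rV[R]_d -> R) (nu : R -> R) : Prop :=
  (forall x, exists u, subgrad phi x u) /\
  (forall x y u v, subgrad phi y u -> subgrad phi x v ->
     nu (norm2 (x - y)) <= dotv (y - x) (u - v)).

Variables (Z : Type) (n : nat).

(* m(P_n, beta, lambda) with P_n = (1/n) sum_i delta_{z_i} *)
Definition m_full (z : 'I_n -> Z) (loss : Z -> 'rV[R]_d -> R)
  (pen : 'rV[R]_d -> R) (lam : R) (b : 'rV[R]_d) : R :=
  n%:R^-1 * (\sum_(j < n) loss (z j) b) + lam * pen b.

(* m(P_{-i}, beta, lambda) with P_{-i} = (1/n) sum_{j <> i} delta_{z_j} *)
Definition m_loo (z : 'I_n -> Z) (loss : Z -> 'rV[R]_d -> R)
  (pen : 'rV[R]_d -> R) (lam : R) (i : 'I_n) (b : 'rV[R]_d) : R :=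
  n%:R^-1 * (\sum_(j < n | j != i) loss (z j) b) + lam * pen b.

Definition is_minimizer (f : 'rV[R]_d -> R) (b : 'rV[R]_d) : Prop :=
  forall b', f b <= f b'.
End Defs.

(* Main.v *)
Require Import Defs.
From HB Require Import structures.
From mathcomp Require Import all_boot all_order all_algebra.
From mathcomp Require Import all_classical all_reals all_analysis.
From mathcomp Require Import ring lra.
Import Order.TTheory GRing.Theory Num.Theory.
Import numFieldNormedType.Exports.
Local Open Scope ring_scope.

Section Helpers.
Local Open Scope classical_set_scope.
Local Open Scope ring_scope.

Lemma dir_deriv_ge (R : realType) (d : nat) (f : 'rV[R]_d -> R) a v K :
  differentiable f a ->
  (forall t : R, 0 < t -> t <= 1 -> K <= (f (a + t *: v) - f a) / t) ->
  K <= 'd f a v.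
Proof.
move=> df H.
rewrite -deriveE //.
have hd : derivable f a v := diff_derivable df.
have h1 : (fun h : R => h^-1 *: ((f \o shift a) (h *: v) - f a)) @ (0:R)^' --> 'D_v f a.
  exact: hd.
have h2 : (fun h : R => h^-1 *: ((f \o shift a) (h *: v) - f a)) @ (0:R)^'+ --> 'D_v f a.
  apply: cvg_trans h1 => A /=; rewrite !near_simpl /= !near_withinE; apply: filter_app.
  by near=> t => ht t0; apply: ht; rewrite gt_eqF.
apply: (cvgr_to_ge h2).
near=> t.
have t0 : 0 < t by near: t; exact: nbhs_right_gt.
have t1 : t <= 1 by near: t; exact: nbhs_right_le.
by rewrite /= [X in f X]addrC -[_ *: _]/(_ * _) mulrC; exact: H.
Unshelve. all: by end_near. Qed.
End Helpers.

Section Dot.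
Variables (R : realType) (d : nat).
Implicit Types x y u v : 'rV[R]_d.

Lemma dotvC x y : dotv x y = dotv y x.
Proof. by rewrite /dotv; apply: eq_bigr => j _; rewrite mulrC. Qed.

Lemma dotvDl x y u : dotv (x + y) u = dotv x u + dotv y u.
Proof. by rewrite /dotv -big_split; apply: eq_bigr => j _; rewrite !mxE mulrDl. Qed.

Lemma dotvZl (s : R) x u : dotv (s *: x) u = s * dotv x u.
Proof. by rewrite /dotv mulr_sumr; apply: eq_bigr => j _; rewrite !mxE mulrA. Qed.

Lemma dotvNl x u : dotv (- x) u = - dotv x u.
Proof. by rewrite -scaleN1r dotvZl mulN1r. Qed.

Lemma dotvBl x y u : dotv (x - y) u = dotv x u - dotv y u.
Proof. by rewrite dotvDl dotvNl. Qed.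

Lemma dotvDr x y u : dotv u (x + y) = dotv u x + dotv u y.
Proof. by rewrite dotvC dotvDl !(dotvC u). Qed.

Lemma dotvZr (s : R) x u : dotv u (s *: x) = s * dotv u x.
Proof. by rewrite dotvC dotvZl dotvC. Qed.

Lemma dotvBr x y u : dotv u (x - y) = dotv u x - dotv u y.
Proof. by rewrite dotvC dotvBl !(dotvC u). Qed.

Lemma dotv0r u : dotv u 0 = 0.
Proof. by rewrite -(scale0r 0) dotvZr mul0r. Qed.

Lemma dotv_ge0 x : 0 <= dotv x x.
Proof. by rewrite /dotv; apply: sumr_ge0 => j _; rewrite -expr2 sqr_ge0. Qed.

Lemma norm2_ge0 x : 0 <= norm2 x.
Proof. exact: sqrtr_ge0. Qed.

Lemma norm2_sqr x : norm2 x ^+ 2 = dotv x x.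
Proof. by rewrite /norm2 sqr_sqrtr // dotv_ge0. Qed.

Lemma norm2Z (s : R) x : norm2 (s *: x) = `|s| * norm2 x.
Proof.
by rewrite /norm2 dotvZl dotvZr mulrA -expr2 sqrtrM ?sqr_ge0 // sqrtr_sqr.
Qed.

Lemma norm2N x : norm2 (- x) = norm2 x.
Proof. by rewrite -scaleN1r norm2Z normrN normr1 mul1r. Qed.

Lemma dotv_eq0 x : dotv x x = 0 -> x = 0.
Proof.
move=> h; apply/rowP => j; rewrite mxE.
have H : forall k : 'I_d, predT k -> 0 <= x ord0 k * x ord0 k.
  by move=> k _; rewrite -expr2 sqr_ge0.
have /eqP : x ord0 j * x ord0 j = 0.
  by apply: (psumr_eq0P H).
by rewrite mulf_eq0 orbb => /eqP.
Qed.

Lemma dotv0l u : dotv 0 u = 0.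
Proof. by rewrite dotvC dotv0r. Qed.

Lemma CS x y : dotv x y <= norm2 x * norm2 y.
Proof.
set A := norm2 x; set B := norm2 y.
have H0 : 0 <= dotv (B *: x - A *: y) (B *: x - A *: y) by apply: dotv_ge0.
rewrite !(dotvBl, dotvBr, dotvZl, dotvZr) -!norm2_sqr -/A -/B (dotvC y x) in H0.
have A0 : 0 <= A := norm2_ge0 x.
have B0 : 0 <= B := norm2_ge0 y.
have [AB0|] := ltP 0 (A * B).
  have H1 : 0 <= (A * B) * (A * B - dotv x y) *+ 2.
    by rewrite (_ : (A * B) * _ *+ 2 = B * (B * A ^+ 2 - A * dotv x y) - A * (B * dotv x y - A * B ^+ 2)) //; ring.
  by move: H1; rewrite pmulrn_lge0 // pmulr_rge0 // subr_ge0.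
move=> AB0.
have /eqP : A * B = 0 by apply/le_anti; rewrite AB0 mulr_ge0.
rewrite mulf_eq0 => /orP [] /eqP Z0.
  have x0 : x = 0 by apply: dotv_eq0; rewrite -norm2_sqr -/A Z0 expr0n.
  by rewrite x0 dotv0l Z0 mul0r.
have y0 : y = 0 by apply: dotv_eq0; rewrite -norm2_sqr -/B Z0 expr0n.
by rewrite y0 dotv0r Z0 mulr0.
Qed.

Lemma dgrad (f : 'rV[R]_d -> R) a h : 'd f a h = dotv (grad f a) h.
Proof.
rewrite {1}(row_sum_delta h) linear_sum /dotv; apply: eq_bigr => j _.
by rewrite linearZ /= mxE mulrC.
Qed.

Lemma no_lin_growth (L : 'rV[R]_d -> R) c :
  (0 < d)%N -> 0 < c -> gradient_growth L (fun r => c * r `^ 1) -> False.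
Proof.
move=> d0 c0 [Hs Hg].
pose e : 'rV[R]_d := const_mx 1.
have ee : dotv e e = d%:R.
  rewrite /dotv (eq_bigr (fun _ => 1)) ?sumr_const ?card_ord // => j _.
  by rewrite mxE mulr1.
have ne0 : 0 < norm2 e by rewrite /norm2 sqrtr_gt0 ee ltr0n.
set ne := norm2 e in ne0 *.
have step : forall x s w w', 0 < s -> subgrad L (x + s *: e) w -> subgrad L x w' ->
    c * ne <= dotv e w - dotv e w'.
  move=> x s w w' s0 hw hw'.
  have := Hg x (x + s *: e) w w' hw hw'.
  rewrite opprD addrA subrr add0r addrAC subrr add0r -scaleNr norm2Z normrN.
  rewrite gtr0_norm // powRr1; last by rewrite mulr_ge0 // ltW.
  rewrite dotvZl dotvBr => h.
  by rewrite -(ler_pM2l s0) mulrCA.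
have [u0 hu0] := Hs 0.
have [u1 hu1] := Hs e.
set M := dotv e u1 - dotv e u0.
set k0 := Num.truncn (M / (c * ne)).
have NM : M < k0.+1%:R * (c * ne).
  by rewrite -ltr_pdivrMr ?mulr_gt0 // truncnS_gt.
have ind : forall k, (k < k0.+1)%N -> forall w,
    subgrad L ((k.+1%:R / k0.+1%:R) *: e) w ->
    dotv e u0 + k.+1%:R * (c * ne) <= dotv e w.
  elim=> [|k IH] kN w hw.
    have := step 0 (k0.+1%:R^-1) w u0.
    rewrite invr_gt0 ltr0n add0r => /(_ isT); rewrite mul1r in hw.
    by move=> /(_ hw hu0); rewrite mul1r; lra.
  have [w' hw'] := Hs ((k.+1%:R / k0.+1%:R) *: e).
  have := IH (ltnW kN) w' hw'.
  have := step _ (k0.+1%:R^-1) w w' _ _ hw'.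
  rewrite invr_gt0 ltr0n -scalerDl -[X in _ + X]mul1r -mulrDl natr1 => /(_ isT hw).
  rewrite -[k.+2]addn1 natrD mulrDl mul1r; lra.
have := ind k0 (ltnSn _) u1.
rewrite mulfV ?pnatr_eq0 // scale1r => /(_ hu1).
rewrite /M in NM; lra.
Qed.

End Dot.

Theorem lemma3 (R : realType) (d : nat) (Z : Type) (n : nat)
  (z : 'I_n -> Z) (loss : Z -> 'rV[R]_d -> R) (pen : 'rV[R]_d -> R)
  (lam : R) (i : 'I_n) (bhat bhat_i : 'rV[R]_d) (c_m q : R) :
  (0 < d)%N ->
  0 <= lam ->
  is_minimizer (m_full z loss pen lam) bhat ->
  is_minimizer (m_loo z loss pen lam i) bhat_i ->
  (forall b : 'rV[R]_d, differentiable (loss (z i)) b) ->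
  0 < c_m -> 0 < q ->
  gradient_growth (m_loo z loss pen lam i) (fun r => c_m * r `^ q) ->
  norm2 (bhat - bhat_i) `^ (q - 1)
    <= n%:R^-1 * c_m^-1 * norm2 (grad (loss (z i)) bhat).
Proof.
move=> d0 lam0 Hmin Hmin_i Hdiff c0 q0 Hgg.
have n0 : (0 < n)%N by apply: (leq_ltn_trans (leq0n i) (ltn_ord i)).
have N0 : 0 < (n%:R : R) by rewrite ltr0n.
have [q1|q1] := eqVneq q 1.
  by subst q; exfalso; exact: (@no_lin_growth R d _ _ d0 c0 Hgg).
set L := m_loo z loss pen lam i in Hmin_i Hgg *.
set l := loss (z i) in Hdiff *.
have FL : forall b, m_full z loss pen lam b = L b + n%:R^-1 * l b.
  move=> b; rewrite /m_full /L /m_loo (bigD1 i) //= mulrDr /l; ring.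
have [Hs Hg] := Hgg.
set g := grad l bhat.
have sub_bhat : subgrad L bhat (- (n%:R^-1 *: g)).
  move=> y; rewrite dotvNl dotvZl -dgrad.
  have : n%:R * (L bhat - L y) <= 'd l bhat (y - bhat).
    apply: dir_deriv_ge (Hdiff bhat) _ => t t0 t1.
    set p := bhat + t *: (y - bhat).
    have conv : L p <= (1 - t) * L bhat + t * L y.
      have [w hw] := Hs p.
      have h1 := hw bhat.
      have h2 := hw y.
      have e1 : bhat - p = (-t) *: (y - bhat) by rewrite /p opprD addrA subrr add0r scaleNr.
      have e2 : y - p = (1 - t) *: (y - bhat) by rewrite /p scalerBl scale1r opprD addrA.
      rewrite e1 dotvZr in h1; rewrite e2 dotvZr in h2.
      nra.
    have hm := Hmin p; rewrite !FL in hm.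
    have hm' : n%:R * (L bhat - L p) <= l p - l bhat.
      have : n%:R * (n%:R^-1 * l bhat) = l bhat by rewrite mulrA mulfV ?mul1r // gt_eqF.
      have : n%:R * (n%:R^-1 * l p) = l p by rewrite mulrA mulfV ?mul1r // gt_eqF.
      nra.
    rewrite ler_pdivlMr //; nra.
  move=> h.
  have : L bhat - L y <= n%:R^-1 * 'd l bhat (y - bhat).
    by rewrite mulrC ler_pdivlMr // mulrC.
  lra.
have sub_bi : subgrad L bhat_i 0.
  by move=> y; rewrite dotv0l addr0; exact: Hmin_i y.
set r := norm2 (bhat - bhat_i).
have RHS0 : 0 <= n%:R^-1 * c_m^-1 * norm2 g.
  by rewrite !mulr_ge0 ?invr_ge0 ?norm2_ge0 // ltW.
have [r0|rpos] := eqVneq r 0.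
  by rewrite r0 powR0 // subr_eq0.
have rgt : 0 < r by rewrite lt_def rpos norm2_ge0.
have h := Hg bhat_i bhat (- (n%:R^-1 *: g)) 0 sub_bhat sub_bi.
rewrite subr0 -[bhat_i - bhat]opprB norm2N -/r in h.
have cs := @CS R d (bhat - bhat_i) (- (n%:R^-1 *: g)).
have ni : 0 <= (n%:R^-1 : R) by rewrite invr_ge0 ltW.
rewrite norm2N norm2Z (ger0_norm ni) -/r in cs.
have hq : r `^ q = r `^ (q - 1) * r.
  have -> : r `^ q = r `^ ((q - 1) + 1) by rewrite subrK.
  by rewrite powRD ?rpos ?implybT // powRr1 // ltW.
rewrite hq in h.
set P := r `^ (q - 1) in h *.
have -> : n%:R^-1 * c_m^-1 * norm2 g = (r * (n%:R^-1 * norm2 g)) / (c_m * r).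
  by field; rewrite rpos !gt_eqF.
rewrite ler_pdivlMr ?mulr_gt0 //.
have -> : P * (c_m * r) = c_m * (P * r) by ring.
exact: le_trans h cs.
Qed.
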